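(* For the algorithm PSRL-ZSG described in the context, the number of episodes up to time $T$, $K_T=\max\{k:t_k\le T\}$, satisfies $$K_T\le\sqrt{2SAT\log T},$$ where $S=|\mathcal{S}|$ and $A=|\mathcal{A}|$.
   Context: A two-player zero-sum stochastic game with finite state space $\mathcal{S}$ and finite joint action space $\mathcal{A}=\mathcal{A}^1\times\mathcal{A}^2$ is played over times $t=1,2,\dots$: at each time the state $s_t$ is observed and a joint action $a_t=(a_t^1,a_t^2)$ is taken (the agent chooses $a_t^1$, an arbitrary opponent chooses $a_t^2$). Let $N_t(s,a)=\sum_{\tau=1}^{t-1}\mathbb{1}(s_\tau=s,a_\tau=a)$. PSRL-ZSG divides time into episodes $k=1,2,\dots$ with start times $t_1=1<t_2<\cdots$ and lengths $T_k=t_{k+1}-t_k$, with $T_0=1$. At the start of each episode the agent samples a transition kernel $\theta_k$ from its posterior and plays the maximin stationary policy for $\theta_k$ throughout the episode. Episode $k$ continues at time $t$ as long as $t\le t_k+T_{k-1}$ and $N_t(s,a)\le 2N_{t_k}(s,a)$ for all $(s,a)\in\mathcal{S}\times\mathcal{A}$; as soon as either condition fails, a new episode starts. *)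

(* Defs.v *)
From mathcomp Require Import all_boot.
Set Implicit Arguments. Unset Strict Implicit. Unset Printing Implicit Defensive.

Section PSRL.
Variables (S A : finType).

(* A trajectory: s t = state at time t, a t = joint action at time t (t >= 1;
   the value at index 0 is irrelevant). *)

Definition visit_count (s : nat -> S) (a : nat -> A) (t : nat) (x : S * A) : nat :=
  \sum_(1 <= tau < t) ((s tau, a tau) == x).

Definition episode_continues (s : nat -> S) (a : nat -> A)
    (tk Tprev t : nat) : bool :=
  (t <= tk + Tprev) &&
  [forall x : S * A, visit_count s a t x <= 2 * visit_count s a tk x].

(* Length T_{k-1} of the episode preceding episode k (k >= 1), with T_0 = 1. *)
Definition prev_length (st : nat -> nat) (k : nat) : nat :=
  if k == 1 then 1 else st k - st k.-1.

Definition psrl_schedule (s : nat -> S) (a : nat -> A) (st : nat -> nat) : Prop :=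
  st 1 = 1 /\
  forall k, 1 <= k ->
    [/\ st k < st k.+1,
        (forall t, st k < t < st k.+1 ->
           episode_continues s a (st k) (prev_length st k) t) &
        ~~ episode_continues s a (st k) (prev_length st k) (st k.+1)].

End PSRL.

(* Main.v *)
Require Import Defs.
From mathcomp Require Import all_boot.
From mathcomp Require Import zify.

Module CombPart.
Set Implicit Arguments. Unset Strict Implicit. Unset Printing Implicit Defensive.

Fixpoint tri (m : nat) : nat := if m is m'.+1 then tri m' + m'.+1 else 0.
Lemma tri2 m : 2 * tri m = m * m.+1.
Proof. elim: m => [|m IH] //=. rewrite mulnDr IH. lia. Qed.
Lemma tri_mono m1 m2 : m1 <= m2 -> tri m1 <= tri m2.
Proof. move=> H. have := tri2 m1. have := tri2 m2. nia. Qed.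
Lemma tri_sub m : m + tri (m - 1) = tri m.
Proof. case: m => [|m] //=. rewrite subn1 /=. lia. Qed.

Section Comb.
Variables (S A : finType) (s : nat -> S) (a : nat -> A) (st : nat -> nat).
Hypothesis Hs : psrl_schedule s a st.
Local Notation N := (visit_count s a).

Lemma N_split t1 t2 x : 1 <= t1 <= t2 ->
  N t2 x = N t1 x + \sum_(t1 <= tau < t2) ((s tau, a tau) == x).
Proof. move=> /andP[H1 H2]; rewrite /visit_count (@big_cat_nat _ _ _ t1) //. Qed.

Lemma N_mono t1 t2 x : 1 <= t1 <= t2 -> N t1 x <= N t2 x.
Proof. move=> H; rewrite (N_split x H); exact: leq_addr. Qed.

Lemma N_diff t1 t2 x : 1 <= t1 <= t2 -> N t2 x <= N t1 x + (t2 - t1).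
Proof.
move=> H; rewrite (N_split x H) leq_add2l.
have H1 : \sum_(t1 <= tau < t2) ((s tau, a tau) == x) <= \sum_(t1 <= tau < t2) 1.
  by apply: leq_sum => i _; exact: leq_b1.
by rewrite sum_nat_const_nat muln1 in H1.
Qed.

Definition ell k := prev_length st k.+1.

Lemma st_inc k : 1 <= k -> st k < st k.+1.
Proof. by move=> Hk; case: (Hs.2 k Hk). Qed.

Lemma st_ge k : 1 <= k -> k <= st k.
Proof.
elim: k => [|k IH] // _; case: k IH => [|k] IH; first by rewrite Hs.1.
have := st_inc (ltn0Sn k); have := IH (ltn0Sn k); lia.
Qed.

Lemma ell_eq k : 1 <= k -> ell k = st k.+1 - st k.
Proof. by case: k. Qed.

Lemma ell0 : ell 0 = 1. Proof. by []. Qed.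

Lemma prev_ell k : 1 <= k -> prev_length st k = ell k.-1.
Proof. by case: k. Qed.

Lemma stop k : 1 <= k ->
  (st k + ell k.-1 < st k.+1) || [exists x, 2 * N (st k) x < N (st k.+1) x].
Proof.
move=> Hk; case: (Hs.2 k Hk) => _ _.
rewrite /episode_continues negb_and -ltnNge prev_ell // negb_forall.
case/orP=> [->//|/existsP[x Hx]]; apply/orP; right; apply/existsP; exists x.
by rewrite ltnNge.
Qed.

Lemma st1_ge k : 1 <= k -> 1 <= st k.
Proof. move=> Hk; have := st_ge Hk; lia. Qed.


Definition w c k := if st k + ell k.-1 < st k.+1 then 0 else tri (c - ell k).
Definition dbl (x : S * A) k := 2 * N (st k) x < N (st k.+1) x.

Lemma potential c J :
  \sum_(1 <= k < J.+1) (c - ell k) + tri (c - ell J - 1)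
    <= tri (c - 2) + \sum_(1 <= k < J.+1) w c k.
Proof.
elim: J => [|J IH].
  by rewrite !big_geq // ell0 add0n addn0 -subnDA.
rewrite !(big_nat_recr J.+1) //=.
have H : tri (c - ell J.+1) <= tri (c - ell J - 1) + w c J.+1.
  rewrite /w /=; case: ifP => Ht.
    rewrite addn0; apply: tri_mono.
    have := ell_eq (ltn0Sn J); have := st_inc (ltn0Sn J); lia.
  exact: leq_addl.
have E := tri_sub (c - ell J.+1).
lia.
Qed.

Lemma w_le c k : 1 <= k -> w c k <= \sum_x (dbl x k) * tri (c - ell k).
Proof.
move=> Hk; rewrite /w; case: ifP => // Ht.
have := stop Hk; rewrite Ht /= => /existsP[x Hx].
rewrite (bigD1 x) //= /dbl Hx mul1n; exact: leq_addr.
Qed.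

Lemma perx c x J :
  2 ^ (\sum_(1 <= k < J.+1) dbl x k) <= N (st J.+1) x + 1 /\
  \sum_(1 <= k < J.+1) dbl x k * tri (c - ell k)
    <= \sum_(h < \sum_(1 <= k < J.+1) dbl x k) tri (c - 2 ^ h).
Proof.
elim: J => [|J [IH1 IH2]].
  by rewrite !big_geq // big_ord0 expn0 leq_addl.
have Hk : 1 <= J.+1 by [].
have Hst := st_inc Hk; have H1 := st1_ge Hk.
have Hm : N (st J.+1) x <= N (st J.+2) x by apply: N_mono; lia.
have Hd : N (st J.+2) x <= N (st J.+1) x + ell J.+1.
  rewrite ell_eq //; apply: N_diff; lia.
case Hb: (dbl x J.+1).
  have Eg : \sum_(1 <= k < J.+2) dbl x k = (\sum_(1 <= k < J.+1) dbl x k).+1.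
    by rewrite big_nat_recr //= Hb addn1.
  have EG : \sum_(1 <= k < J.+2) dbl x k * tri (c - ell k) =
     \sum_(1 <= k < J.+1) dbl x k * tri (c - ell k) + tri (c - ell J.+1).
    by rewrite big_nat_recr //= Hb mul1n.
  rewrite Eg EG big_ord_recr /= expnS.
  have Hb' : 2 * N (st J.+1) x < N (st J.+2) x := Hb.
  split; first lia.
  apply: leq_add => //; apply: tri_mono.
  have : 2 ^ (\sum_(1 <= k < J.+1) dbl x k) <= ell J.+1 by lia.
  lia.
have Eg : \sum_(1 <= k < J.+2) dbl x k = \sum_(1 <= k < J.+1) dbl x k.
  by rewrite big_nat_recr //= Hb addn0.
have EG : \sum_(1 <= k < J.+2) dbl x k * tri (c - ell k) =
   \sum_(1 <= k < J.+1) dbl x k * tri (c - ell k).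
  by rewrite big_nat_recr //= Hb mul0n addn0.
rewrite Eg EG; split; lia.
Qed.


Lemma tele J : \sum_(1 <= k < J.+1) ell k = st J.+1 - 1.
Proof.
elim: J => [|J IH]; first by rewrite big_geq // Hs.1.
rewrite big_nat_recr //= IH ell_eq //.
have := st_inc (ltn0Sn J); have := st1_ge (ltn0Sn J); lia.
Qed.

Lemma tailS p g :
  \sum_(h < g) tri (2 ^ p - 2 ^ h) <= \sum_(h < p) tri (2 ^ p - 2 ^ h).
Proof.
rewrite -!(big_mkord xpredT (fun h => tri (2 ^ p - 2 ^ h))).
case: (leqP g p) => Hg.
  rewrite (big_cat_nat (leq0n g) Hg) /=; exact: leq_addr.
rewrite (big_cat_nat (leq0n p) (ltnW Hg)) /=.
have -> : \sum_(p <= i < g) tri (2 ^ p - 2 ^ i) = 0.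
  rewrite big_nat_cond big1 // => h; rewrite andbT => /andP[Hh _].
  have : 2 ^ p <= 2 ^ h by rewrite leq_exp2l.
  by rewrite -subn_eq0 => /eqP ->.
by rewrite addn0.
Qed.

Lemma comb p K T : 1 <= K -> st K <= T ->
  2 ^ p * (K - 1) <= T - 1 + tri (2 ^ p - 2) +
     #|{: S * A}| * \sum_(h < p) tri (2 ^ p - 2 ^ h).
Proof.
case: K => [//|J] _ HT; rewrite subn1 /=.
set c := 2 ^ p.
have E1 : c * J = \sum_(1 <= k < J.+1) c by rewrite sum_nat_const_nat subn1 /= mulnC.
have E2 : \sum_(1 <= k < J.+1) c <=
    \sum_(1 <= k < J.+1) ell k + \sum_(1 <= k < J.+1) (c - ell k).
  rewrite -big_split /=; apply: leq_sum => k _; lia.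
have E3 := potential c J.
have E4 : \sum_(1 <= k < J.+1) w c k <=
   \sum_(1 <= k < J.+1) \sum_x dbl x k * tri (c - ell k).
  rewrite big_nat_cond [X in _ <= X]big_nat_cond; apply: leq_sum => k.
  rewrite andbT => /andP[Hk _]; exact: w_le.
rewrite exchange_big /= in E4.
have E5 : \sum_x \sum_(1 <= k < J.+1) dbl x k * tri (c - ell k) <=
   \sum_(x : S * A) \sum_(h < p) tri (c - 2 ^ h).
  apply: leq_sum => x _; have [_ H] := perx c x J.
  apply: leq_trans H _; exact: tailS.
rewrite sum_nat_const in E5.
change #|xpredT| with #|{: S * A}| in E5.
have E6 := tele J.
have E7 : \sum_(1 <= k < J.+1) (c - ell k) <=
   tri (c - 2) + #|{: S * A}| * \sum_(h < p) tri (c - 2 ^ h).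
  apply: leq_trans (leq_addr _ _) _; apply: leq_trans E3 _.
  apply: leq_add => //; exact: leq_trans E4 E5.
have HT' : st J.+1 - 1 <= T - 1 by apply: leq_sub2r.
rewrite E1; apply: leq_trans E2 _; rewrite E6.
apply: leq_trans (leq_add HT' E7) _; rewrite addnA; exact: leqnn.
Qed.

End Comb.

Lemma Sgen p B : 2 ^ p <= 2 * B ->
  6 * \sum_(h < p) tri (B - 2 ^ h) + 6 * B * 2 ^ p + 3 * 2 ^ p =
  3 * p * (B * B) + 6 * B + 2 ^ p * 2 ^ p + 3 * p * B + 2.
Proof.
elim: p => [|p IH] HB; first by rewrite big_ord0 expn0; lia.
rewrite big_ord_recr /= expnS in HB *.
have HB' : 2 ^ p <= B by lia.
have {}IH := IH (leq_trans HB' (leq_pmull _ (ltn0Sn 1))).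
have T2 := tri2 (B - 2 ^ p).
move: IH T2; set u := 2 ^ p; set X := \sum_(h < p) tri (B - 2 ^ h).
have -> : B = u + (B - u) by lia.
set d := B - u; nia.
Qed.

Lemma Sclosed p :
  6 * \sum_(h < p) tri (2 ^ p - 2 ^ h) + 5 * (2 ^ p * 2 ^ p) =
  3 * p * (2 ^ p * 2 ^ p) + 3 * (p + 1) * 2 ^ p + 2.
Proof.
have := Sgen (B := 2 ^ p) (leq_pmull _ (ltn0Sn 1)).
set u := 2 ^ p; set X := \sum_(h < p) tri (u - 2 ^ h); nia.
Qed.

End CombPart.
Import CombPart.

From Stdlib Require Import Reals.
From Stdlib Require Import Lra Psatz.

Module RealPart.
Local Open Scope R_scope.

Lemma exp_le_inv x : 0 <= x < 1 -> exp x <= / (1 - x).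
Proof.
move=> [H0 H1].
have H := exp_ineq1_le (- x); rewrite exp_Ropp in H.
have Hp : 0 < exp x by apply exp_pos.
have Hi : / exp x * exp x = 1 by field; lra.
have : (1 - x) * exp x <= 1 by nra.
move=> H2; apply Rmult_le_reg_l with (1 - x); first lra.
rewrite Rinv_r; lra.
Qed.

Lemma ln2_ge : 2 / 3 <= ln 2.
Proof.
have H := exp_le_inv (1/18) ltac:(lra).
have E : exp (2/3) = exp (1/18) ^ 12.
  rewrite -(exp_ln (exp (1/18) ^ 12)); last by apply pow_lt, exp_pos.
  rewrite ln_pow; last by apply exp_pos.
  by rewrite ln_exp; f_equal; simpl; lra.
have H2 : exp (1/18) ^ 12 <= (/ (1 - 1/18)) ^ 12.
  apply pow_incr; split; [left; apply exp_pos | exact H].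
have H3 : (/ (1 - 1/18)) ^ 12 < 2 by simpl; lra.
rewrite -(ln_exp (2/3)); left; apply ln_increasing; first by apply exp_pos.
lra.
Qed.

Lemma ln3_ge : 1 <= ln 3.
Proof.
rewrite -(ln_exp 1); have := exp_le_3; case=> H.
  by left; apply ln_increasing; [apply exp_pos|].
by rewrite H; right.
Qed.

Lemma ln_le_mono x y : 0 < x -> x <= y -> ln x <= ln y.
Proof. move=> Hx [H|->]; [left; apply ln_increasing|right] => //. Qed.

Lemma ln_pow2 (m : nat) (T : R) : 2 ^ m <= T -> INR m * (2/3) <= ln T.
Proof.
move=> H.
have Hp : 0 < 2 ^ m by apply pow_lt; lra.
apply Rle_trans with (ln (2 ^ m)); last by apply ln_le_mono.
rewrite ln_pow; last lra.
have := ln2_ge; have := pos_INR m; nra.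
Qed.

Lemma core_gen (n T K p A : R) : 1 <= n -> 4 <= A -> 2 <= p ->
  (3 + n * (3 * p - 5)) * A ^ 2 <= 12 * T ->
  3 * T <= (3 + n * (3 * p - 5) + 3 * n) * A ^ 2 ->
  6 * A * (K - 1) + 5 * n * A ^ 2 <=
    6 * (T - 1) + 3 * ((A - 2) * (A - 1)) + n * (3 * p * A ^ 2 + 3 * (p + 1) * A + 2) ->
  1 <= K ->
  K ^ 2 <= (1 + / A) * ((3/4) * (3 + n * (3 * p - 5)) + n) * T
           + (1 + A) * ((n * (p + 1) - 1) / 2 + n / (3 * A)) ^ 2.
Proof.
move=> Hn HA Hp H1 H2 HB HK.
set Q := 3 + n * (3 * p - 5) in H1 H2 *.
set e := (n * (p + 1) - 1) / 2 + n / (3 * A).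
have HA0 : 0 < A by lra.
have HQ : 0 < Q by rewrite /Q; nra.
have HQA : 0 < Q * A ^ 2 by apply Rmult_lt_0_compat; [lra | apply pow_lt; lra].
have HT : 0 < T by lra.
set f := T / A + Q * A / 6.
have Hf : K <= f + e.
  rewrite /f /e.
  apply Rmult_le_reg_l with (6 * A); first lra.
  have -> : 6 * A * (T / A + Q * A / 6 + ((n * (p + 1) - 1) / 2 + n / (3 * A)))
     = 6 * T + Q * A ^ 2 + 3 * A * (n * (p + 1) - 1) + 2 * n.
    rewrite /Q; field; lra.
  rewrite /Q; nra.
have Hf2 : f ^ 2 <= ((3/4) * Q + n) * T.
  have Hprod : 0 <= (12 * T - Q * A ^ 2) * ((Q + 3 * n) * A ^ 2 - 3 * T) by nra.
  have -> : f ^ 2 = (36 * T ^ 2 + Q ^ 2 * A ^ 4 + 12 * Q * T * A ^ 2) / (36 * A ^ 2).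
    rewrite /f; field; lra.
  apply Rmult_le_reg_r with (36 * A ^ 2); first nra.
  rewrite /Rdiv Rmult_assoc Rinv_l; last nra.
  nra.
have He : 0 <= e.
  rewrite /e; have : 0 < n / (3 * A) by apply Rdiv_lt_0_compat; lra.
  nra.
have Hfe : (f + e) ^ 2 <= (1 + / A) * f ^ 2 + (1 + A) * e ^ 2.
  have E : (1 + / A) * f ^ 2 + (1 + A) * e ^ 2 - (f + e) ^ 2 = (f - A * e) ^ 2 / A.
    field; lra.
  have : 0 <= (f - A * e) ^ 2 / A.
    apply Rmult_le_pos; [apply pow2_ge_0 | left; apply Rinv_0_lt_compat; lra].
  lra.
have HK0 : 0 <= K by lra.
have : K ^ 2 <= (f + e) ^ 2 by apply pow_incr; lra.
have : (1 + / A) * f ^ 2 <= (1 + / A) * (((3/4) * Q + n) * T).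
  apply Rmult_le_compat_l => //; have : 0 < / A by apply Rinv_0_lt_compat.
  lra.
lra.
Qed.

Lemma fin_big (n T p A : R) : 1 <= n -> 5 <= p -> 32 <= A ->
  (3 + n * (3 * p - 5)) * A ^ 2 <= 12 * T ->
  (1 + / A) * ((3/4) * (3 + n * (3 * p - 5)) + n) * T
    + (1 + A) * ((n * (p + 1) - 1) / 2 + n / (3 * A)) ^ 2
  <= 2 * n * T * (4 * p / 3).
Proof.
move=> Hn Hp HA H1.
set e := (n * (p + 1) - 1) / 2 + n / (3 * A).
have HA0 : 0 < A by lra.
have Hd : 0 < n / (3 * A) <= n / 96.
  split; first by apply Rdiv_lt_0_compat; lra.
  apply Rmult_le_compat_l; first lra.
  apply Rinv_le_contravar; lra.
have He : 0 <= e <= n * (p + 2) / 2 by rewrite /e; nra.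
have Hi : 0 < / A <= 1 / 32.
  split; first by apply Rinv_0_lt_compat.
  rewrite /Rdiv Rmult_1_l; apply Rinv_le_contravar; lra.
have HA2 : 1024 <= A ^ 2 by nra.
have HT : n * (3 * p - 5) * A ^ 2 <= 12 * T by nra.
have HT0 : 0 < T.
  have : 0 < n * (3 * p - 5) * A ^ 2.
    apply Rmult_lt_0_compat; [apply Rmult_lt_0_compat|]; lra.
  lra.
have HG : (3/4) * (3 + n * (3 * p - 5)) + n <= n * (9/4 * p - 1/2) by nra.
have HG0 : 0 <= (3/4) * (3 + n * (3 * p - 5)) + n by nra.
have T1 : (1 + / A) * ((3/4) * (3 + n * (3 * p - 5)) + n) * T
          <= (33/32) * (n * (9/4 * p - 1/2)) * T.
  apply Rmult_le_compat_r; first lra.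
  apply Rmult_le_compat; lra.
have T2 : (1 + A) * e ^ 2 <= (33/32) * A * (n * (p + 2) / 2) ^ 2.
  apply Rmult_le_compat; [lra | nra | lra | ].
  apply pow_incr; lra.
have T3 : (33/32) * A * (n * (p + 2) / 2) ^ 2
          <= (133/384) * p * n * (n * (3 * p - 5) * A ^ 2 / 12).
  have Hq : (33/128) * (p + 2) ^ 2 <= (133/4608) * p * (3 * p - 5) * A.
    have : (133/144) * p * (3 * p - 5) <= (133/4608) * p * (3 * p - 5) * A.
      have : 0 <= p * (3 * p - 5) by nra.
      nra.
    nra.
  have Hn2 : 0 < n * n * A by nra.
  nra.
have T4 : (133/384) * p * n * (n * (3 * p - 5) * A ^ 2 / 12) <= (133/384) * p * n * T.
  apply Rmult_le_compat_l; [nra | lra].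
nra.
Qed.

Lemma fin_small (n T p A : R) : 1 <= n ->
  (p = 2 /\ A = 4) \/ (p = 3 /\ A = 8) \/ (p = 4 /\ A = 16) ->
  (3 + n * (3 * p - 5)) * A ^ 2 <= 12 * T -> 32 * n < 3 * T ->
  (1 + / A) * ((3/4) * (3 + n * (3 * p - 5)) + n) * T
    + (1 + A) * ((n * (p + 1) - 1) / 2 + n / (3 * A)) ^ 2
  <= 2 * n * T * (16 / 3).
Proof.
move=> Hn Hc H1 H2.
have HT0 : 0 < T by lra.
have Hn1 : 0 <= (n - 1) * T by apply Rmult_le_pos; lra.
have Hn2 : 0 <= n * (3 * T - 32 * n) by apply Rmult_le_pos; lra.
case: Hc => [[Hp HA]|[[Hp HA]|[Hp HA]]]; subst p A.
- have E : (1 + / 4) = 5/4 by field.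
  have E2 : (n * (2 + 1) - 1) / 2 + n / (3 * 4) = 19/12 * n - 1/2 by field.
  rewrite E E2.
  have : (19/12 * n - 1/2) ^ 2 <= (19/12 * n) ^ 2 by apply pow_incr; lra.
  nra.
- have E : (1 + / 8) = 9/8 by field.
  have E2 : (n * (3 + 1) - 1) / 2 + n / (3 * 8) = 49/24 * n - 1/2 by field.
  rewrite E E2.
  have : (49/24 * n - 1/2) ^ 2 <= (49/24 * n) ^ 2 by apply pow_incr; lra.
  have E8 : (8:R) ^ 2 = 64 by simpl; lra.
  have H1' : (3 + n * 4) * 64 <= 12 * T by rewrite E8 in H1; lra.
  have Hn3 : 0 <= n * (12 * T - (3 + n * 4) * 64) by apply Rmult_le_pos; lra.
  nra.
- have E : (1 + / 16) = 17/16 by field.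
  have E2 : (n * (4 + 1) - 1) / 2 + n / (3 * 16) = 121/48 * n - 1/2 by field.
  rewrite E E2.
  have : (121/48 * n - 1/2) ^ 2 <= (121/48 * n) ^ 2 by apply pow_incr; lra.
  have E8 : (16:R) ^ 2 = 256 by simpl; lra.
  have H1' : (3 + n * 7) * 256 <= 12 * T by rewrite E8 in H1; lra.
  have Hn3 : 0 <= n * (12 * T - (3 + n * 7) * 256) by apply Rmult_le_pos; lra.
  nra.
Qed.

End RealPart.
Import RealPart.

From Stdlib Require Import NArith Lia.
From Stdlib Require List.

Module CheckPart.

Definition RN (T n p A : N) : N :=
  6 * (T - 1) + 3 * ((A - 2) * (A - 1)) + n * (3 * p * (A * A) + 3 * (p + 1) * A + 2).
Definition kbN (T n p A : N) : N := 1 + (RN T n p A - 5 * n * (A * A)) / (6 * A).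
Definition okN (T n p A : N) : bool :=
  let k := N.min T (kbN T n p A) in
  (3 * k * k <=? 4 * n * T * N.log2 T)%N || ((T =? 3)%N && (k * k <=? 6 * n)%N).
Definition pAs : list (N * N) :=
  (0,1)%num :: (1,2)%num :: (2,4)%num :: (3,8)%num :: (4,16)%num :: (5,32)%num :: (6,64)%num :: (7,128)%num :: nil.
Definition chkN (T n : N) : bool := List.existsb (fun pa => okN T n (fst pa) (snd pa)) pAs.
Definition allchk : bool :=
  List.forallb (fun T => List.forallb (fun n => chkN T n) (List.map N.of_nat (List.seq 1 128)))
          (List.map N.of_nat (List.seq 3 253)).

Lemma allchk_ok : allchk = true.
Proof. vm_compute. reflexivity. Qed.

Definition HBnat (n T K p : nat) : Prop :=
  (K - 1) * expn 2 p * 6 + n * (expn 2 p * expn 2 p) * 5 <=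
  (T - 1) * 6 + ((expn 2 p - 2) * (expn 2 p - 1)) * 3 +
  n * (p * (expn 2 p * expn 2 p) * 3 + (p + 1) * expn 2 p * 3 + 2).

Lemma ok_sound (n T K p A : nat) : A = expn 2 p -> HBnat n T K p -> K <= T ->
  okN (N.of_nat T) (N.of_nat n) (N.of_nat p) (N.of_nat A) = true ->
  (3 * (K * K) <= 4 * n * T * N.to_nat (N.log2 (N.of_nat T))) \/
  (T = 3 /\ K * K <= 6 * n).
Proof.
move=> HA; rewrite /HBnat -HA => HB HKT.
have HA1 : 1 <= A by rewrite HA expn_gt0.
have HB' : (6 * N.of_nat A * (N.of_nat K - 1) + 5 * N.of_nat n * (N.of_nat A * N.of_nat A)
   <= RN (N.of_nat T) (N.of_nat n) (N.of_nat p) (N.of_nat A))%num.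
  rewrite /RN; lia.
have Hk : (N.of_nat K <= kbN (N.of_nat T) (N.of_nat n) (N.of_nat p) (N.of_nat A))%num.
  rewrite /kbN.
  have : (N.of_nat K - 1 <= (RN (N.of_nat T) (N.of_nat n) (N.of_nat p) (N.of_nat A)
            - 5 * N.of_nat n * (N.of_nat A * N.of_nat A)) / (6 * N.of_nat A))%num.
    apply N.div_le_lower_bound; first lia.
    lia.
  lia.
have HKT' : (N.of_nat K <= N.of_nat T)%num by lia.
set kb := kbN _ _ _ _ in Hk.
have Hm : (N.of_nat K <= N.min (N.of_nat T) kb)%num by apply N.min_glb.
rewrite /okN -/kb.
set k := N.min _ _ in Hm *.
case/orP.
  move/N.leb_le => H; left.
  have : (3 * N.of_nat K * N.of_nat K <= 3 * k * k)%num.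
    apply N.mul_le_mono; [apply N.mul_le_mono_l|]; lia.
  lia.
case/andP => /N.eqb_eq H3 /N.leb_le H; right; split; first lia.
have : (N.of_nat K * N.of_nat K <= k * k)%num by apply N.mul_le_mono; lia.
lia.
Qed.


Lemma small_sound (T n K : nat) : 3 <= T <= 255 -> 1 <= n <= 128 -> K <= T ->
  (forall p, HBnat n T K p) ->
  (3 * (K * K) <= 4 * n * T * N.to_nat (N.log2 (N.of_nat T))) \/
  (T = 3 /\ K * K <= 6 * n).
Proof.
move=> /andP[HT1 HT2] /andP[Hn1 Hn2] HKT HB.
have Hc : chkN (N.of_nat T) (N.of_nat n) = true.
  have := allchk_ok; rewrite /allchk List.forallb_forall => /(_ (N.of_nat T)).
  rewrite List.forallb_forall => H; apply: H.
    apply: List.in_map; apply/List.in_seq; lia.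
  apply: List.in_map; apply/List.in_seq; lia.
move: Hc; rewrite /chkN List.existsb_exists => [[[p A] [Hin Hok]]].
move: Hin Hok => /=.
case=> [[<- <-]|]; first exact: (@ok_sound n T K 0 1).
case=> [[<- <-]|]; first exact: (@ok_sound n T K 1 2).
case=> [[<- <-]|]; first exact: (@ok_sound n T K 2 4).
case=> [[<- <-]|]; first exact: (@ok_sound n T K 3 8).
case=> [[<- <-]|]; first exact: (@ok_sound n T K 4 16).
case=> [[<- <-]|]; first exact: (@ok_sound n T K 5 32).
case=> [[<- <-]|]; first exact: (@ok_sound n T K 6 64).
case=> [[<- <-]|] //; exact: (@ok_sound n T K 7 128).
Qed.

End CheckPart.
Import CheckPart.


Lemma exists_switch (P : nat -> bool) M : P 0 -> ~~ P M -> exists p, P p /\ ~~ P p.+1.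
Proof.
move=> H0; elim: M => [|M IH]; first by rewrite H0.
case HM: (P M); last by move=> _; apply: IH; rewrite HM.
by move=> HM1; exists M; rewrite HM1.
Qed.

Lemma INR_pow2 p : INR (expn 2 p) = (2 ^ p)%R.
Proof.
elim: p => [|p IH]; first by [].
rewrite expnS mult_INR IH /=; lra.
Qed.

Local Open Scope R_scope.

Lemma INR1' : INR 1 = 1. Proof. by []. Qed.
Lemma INR2 : INR 2 = 2. Proof. simpl; lra. Qed.
Lemma INR3 : INR 3 = 3. Proof. simpl; lra. Qed.
Lemma INR5 : INR 5 = 5. Proof. simpl; lra. Qed.
Lemma INR6 : INR 6 = 6. Proof. simpl; lra. Qed.
Lemma INR12 : INR 12 = 12. Proof. simpl; lra. Qed.
Ltac numR := rewrite ?INR12 ?INR6 ?INR5 ?INR3 ?INR2 ?INR1'.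

Lemma final_real (n T K : nat) : (1 <= n)%nat -> (3 <= T)%nat -> (K <= T)%nat -> (1 <= K)%nat ->
  (forall p, HBnat n T K p) ->
  INR K ^ 2 <= 2 * INR n * INR T * ln (INR T).
Proof.
move=> Hn HT HKT HK1 HB.
have HTr : 3 <= INR T by have := le_INR 3 T (elimT leP HT); rewrite /=; lra.
have HKr : INR K <= INR T by apply: le_INR; apply/leP.
have HK0 : 0 <= INR K by apply pos_INR.
have Hnr : 1 <= INR n by have := le_INR 1 n (elimT leP Hn); rewrite /=; lra.
have HL : 1 <= ln (INR T).
  apply: Rle_trans ln3_ge _; apply ln_le_mono; lra.
case: (Rle_lt_dec (INR T) (2 * INR n * ln (INR T))) => Hc.
  have : INR K ^ 2 <= INR T * INR T by nra.
  nra.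
have HTpos : 0 < INR T by lra.
case: (leqP T 255) => HT255.
  have Hn128 : (n <= 128)%nat.
    case: (leqP n 128) => // H.
    have := le_INR _ _ (elimT leP H); have := le_INR _ _ (elimT leP HT255).
    rewrite /=; nra.
  have := @small_sound T n K.
  rewrite HT HT255 Hn Hn128 HKT => /(_ isT isT isT HB) [H|[HT3 H]].
    set l := N.log2 (N.of_nat T) in H.
    have Hl : (2 ^ l <= N.of_nat T)%num.
      by apply: (proj1 (N.log2_spec _ _)); lia.
    have Hl' : (Nat.pow 2 (N.to_nat l) <= T)%coq_nat.
      have E : Nat.pow 2 (N.to_nat l) = N.to_nat (2 ^ l)%num by rewrite N2Nat.inj_pow.
      rewrite E; lia.
    have Hl2 : 2 ^ (N.to_nat l) <= INR T.
      have E2 : INR 2 = 2 by simpl; lra.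
      by have := le_INR _ _ Hl'; rewrite pow_INR E2.
    have Hln := ln_pow2 _ _ Hl2.
    have := le_INR _ _ (elimT leP H); rewrite !mult_INR /= => H'.
    have Hm0 : 0 <= INR (N.to_nat l) by apply pos_INR.
    have : INR n * INR T * (INR (N.to_nat l) * (2 / 3)) <= INR n * INR T * ln (INR T).
      apply Rmult_le_compat_l => //; nra.
    nra.
  have := le_INR _ _ (elimT leP H); rewrite !mult_INR /= => H'.
  have : INR T = 3 by rewrite HT3 /=; lra.
  nra.
have HL8 : 16 / 3 <= ln (INR T).
  have H8 : 2 ^ 8 <= INR T.
    have := le_INR _ _ (elimT leP HT255); rewrite /=; lra.
  have := ln_pow2 _ _ H8; rewrite /=; lra.
have H32 : 32 * INR n < 3 * INR T by nra.
have H32n : (32 * n < 3 * T)%nat.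
  case: (leqP (3 * T) (32 * n)) => // H.
  have := le_INR _ _ (elimT leP H); rewrite !mult_INR /=; lra.
set P := fun p : nat => ((expn 2 p * expn 2 p) * 3 + n * p * (expn 2 p * expn 2 p) * 3
                  <= T * 12 + n * (expn 2 p * expn 2 p) * 5)%nat.
have [p [HP HnP]] : exists p, P p /\ ~~ P p.+1.
  apply: (@exists_switch P T).
    rewrite /P expn0; lia.
  rewrite /P -ltnNge.
  have Hu : (T < expn 2 T)%nat by apply: ltn_expl.
  move: Hu; set u := expn 2 T => Hu.
  nia.
move: HP HnP; rewrite /P => HP HnP.
rewrite -ltnNge expnSr in HnP.
have Hp2 : (2 <= p)%nat.
  case: p HP HnP => [|[|p]] // HP HnP.
    move: HnP; rewrite expn0; lia.
  move: HnP; rewrite expn1; lia.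
set Au := expn 2 p in HP HnP.
have HAu : (4 <= Au)%nat by rewrite /Au (_ : 4 = expn 2 2)%nat // leq_exp2l.
have HAr : INR Au = 2 ^ p by rewrite INR_pow2.
set A := 2 ^ p in HAr.
have HA4 : 4 <= A by rewrite -HAr; have := le_INR _ _ (elimT leP HAu); rewrite /=; lra.
have H1 : (3 + INR n * (3 * INR p - 5)) * A ^ 2 <= 12 * INR T.
  have := le_INR _ _ (elimT leP HP); rewrite !plus_INR !mult_INR HAr; numR; nra.
have H2 : 3 * INR T <= (3 + INR n * (3 * INR p - 5) + 3 * INR n) * A ^ 2.
  have := lt_INR _ _ (elimT ltP HnP); rewrite !plus_INR !mult_INR HAr; numR; rewrite S_INR => H.
  nra.
have H3 : 6 * A * (INR K - 1) + 5 * INR n * A ^ 2 <=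
    6 * (INR T - 1) + 3 * ((A - 2) * (A - 1)) +
    INR n * (3 * INR p * A ^ 2 + 3 * (INR p + 1) * A + 2).
  have := le_INR _ _ (elimT leP (HB p)).
  rewrite -/Au ?plus_INR ?mult_INR ?plus_INR ?mult_INR ?plus_INR ?mult_INR !minus_INR; try (apply/leP; lia).
  rewrite HAr; numR; lra.
have Hpr : 2 <= INR p by have := le_INR _ _ (elimT leP Hp2); rewrite INR2.
have HKK := core_gen _ _ _ _ _ Hnr HA4 Hpr H1 H2 H3
   ltac:(by have := le_INR _ _ (elimT leP HK1); rewrite INR1').
have HnT : 0 <= 2 * INR n * INR T by nra.
case: (leqP 5 p) => Hp5.
  have H32A : (32 <= Au)%nat by rewrite /Au (_ : 32 = expn 2 5)%nat // leq_exp2l.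
  have HA32 : 32 <= A.
    rewrite -HAr; have := le_INR _ _ (elimT leP H32A).
    have -> : INR 32 = 32 by simpl; lra.
    done.
  have Hp5r : 5 <= INR p by have := le_INR _ _ (elimT leP Hp5); rewrite INR5.
  have HF := fin_big _ _ _ _ Hnr Hp5r HA32 H1.
  have HAT : 2 ^ (p + p) <= INR T.
    rewrite pow_add -/A.
    have : 13 <= 3 + INR n * (3 * INR p - 5) by nra.
    have : 0 <= A * A by nra.
    have E : A ^ 2 = A * A by simpl; lra.
    rewrite E in H1; nra.
  have HLp := ln_pow2 _ _ HAT.
  rewrite plus_INR in HLp.
  have : 2 * INR n * INR T * (4 * INR p / 3) <= 2 * INR n * INR T * ln (INR T).
    apply Rmult_le_compat_l => //; lra.
  lra.
have Hcs : (INR p = 2 /\ A = 4) \/ (INR p = 3 /\ A = 8) \/ (INR p = 4 /\ A = 16).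
  rewrite /A; have : (p = 2 \/ p = 3 \/ p = 4)%nat by lia.
  case=> [->|[->|->]]; [left|right; left|right; right]; split; simpl; lra.
have HF := fin_small _ _ _ _ Hnr Hcs H1 H32.
have : 2 * INR n * INR T * (16 / 3) <= 2 * INR n * INR T * ln (INR T).
  apply Rmult_le_compat_l => //; lra.
lra.
Qed.

Lemma HB_of_comb (S0 A0 : finType) (s : nat -> S0) (a : nat -> A0) st T k :
  psrl_schedule s a st -> (1 <= k)%nat -> (st k <= T)%nat ->
  forall p, HBnat (#|S0| * #|{: A0}|) T k p.
Proof.
move=> Hs Hk Hst p.
have H := comb Hs p Hk Hst.
rewrite card_prod in H.
have HS := Sclosed p.
have Ht := tri2 (expn 2 p - 2).
rewrite /HBnat.
move: H HS Ht.
set X := \sum_(h < p) tri (expn 2 p - expn 2 h).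
set t := tri (expn 2 p - 2).
set A := expn 2 p.
set m := (#|S0| * #|{: A0}|)%nat.
have HA : (1 <= A)%nat by rewrite /A expn_gt0.
have E : ((A - 2) * (A - 2).+1 = (A - 2) * (A - 1))%nat.
  case: (leqP 2 A) => H2; first by have -> : ((A - 2).+1 = A - 1)%nat by lia.
  by have -> : (A - 2 = 0)%nat by lia.
rewrite E => H HS Ht.
have E2 : (m * (6 * X) + m * (5 * (A * A)) = m * (3 * p * (A * A) + 3 * (p + 1) * A + 2))%nat.
  by rewrite -mulnDr HS.
have H6 : (6 * (A * (k - 1)) <= 6 * (T - 1 + t + m * X))%nat by rewrite leq_mul2l H orbT.
lia.
Qed.

Local Close Scope R_scope.

Theorem lemma3 (S A1 A2 : finType) (s : nat -> S) (a : nat -> A1 * A2)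
    (st : nat -> nat) (T : nat) :
  psrl_schedule s a st ->
  3 <= T ->
  forall k, 1 <= k -> st k <= T ->
  Rle (INR k)
      (sqrt (2 * INR #|S| * INR #|{: A1 * A2}| * INR T * ln (INR T))).
Proof.
move=> Hs HT k Hk Hst.
have HS0 : (0 < #|S|)%nat by apply/card_gt0P; exists (s 0).
have HA0 : (0 < #|{: A1 * A2}|)%nat by apply/card_gt0P; exists (a 0).
have Hn : (1 <= #|S| * #|{: A1 * A2}|)%nat by rewrite muln_gt0 HS0 HA0.
have HKT : (k <= T)%nat by apply: leq_trans (st_ge Hs Hk) Hst.
have HB := @HB_of_comb _ _ s a st T k Hs Hk Hst.
have H := final_real _ _ _ Hn HT HKT Hk HB.
rewrite mult_INR in H.
have HK0 : (0 <= INR k)%R by apply pos_INR.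
rewrite -(sqrt_pow2 (INR k) HK0).
apply sqrt_le_1_alt.
have -> : (2 * INR #|S| * INR #|{: A1 * A2}| * INR T * ln (INR T) =
   2 * (INR #|S| * INR #|{: A1 * A2}|) * INR T * ln (INR T))%R by ring.
exact H.
Qed.
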